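(* Consider the system $\dot X=(1-Y)X$, $\dot Y=(X-U)Y$ on $\{X>0,Y>0\}$ and the function $$V(X,Y)=\Psi(1/X)+\Psi(Y/X).$$ Under the feedback $U=Y+\frac{Y-X}{Y}$, along closed-loop solutions $$\dot V=-\frac{(X-1)^2}{X}-\frac{(Y-X)^2}{XY},$$ which is negative definite on $\{X>0,Y>0\}$ with respect to $(1,1)$. Moreover, $V$ is positive definite with respect to $(1,1)$ and radially unbounded on the quadrant.
   Context: $\Psi(S)=S-1-\ln S$ for $S>0$. Radially unbounded on the quadrant means $V\to\infty$ as $(X,Y)$ approaches $\{X=0\}\cup\{Y=0\}$ or as $X+Y\to\infty$. *)

(* Defs.v *)
From Stdlib Require Import Reals.
Open Scope R_scope.

Definition Psi (S : R) : R := S - 1 - ln S.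

Definition V (X Y : R) : R := Psi (1 / X) + Psi (Y / X).

Definition Ufb (X Y : R) : R := Y + (Y - X) / Y.

Definition Vdot (X Y : R) : R := - ((X - 1) ^ 2 / X) - (Y - X) ^ 2 / (X * Y).

(* Main.v *)
Require Import Defs.
From Stdlib Require Import Reals Lra.
Open Scope R_scope.

Lemma ln_lt_sub1 s : 0 < s -> s <> 1 -> ln s < s - 1.
Proof.
  intros hs hne.
  assert (h := exp_ineq1 (s - 1) ltac:(lra)).
  destruct (Rlt_or_le (ln s) (s - 1)) as [H|H]; auto.
  exfalso. assert (exp (s-1) <= exp (ln s)).
  { destruct H as [H|H]. left; now apply exp_increasing. right; now rewrite H. }
  rewrite exp_ln in H0 by lra. lra.
Qed.

Lemma ln_le_sub1 s : 0 < s -> ln s <= s - 1.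
Proof.
  intros hs. destruct (Req_dec s 1) as [->|h].
  - rewrite ln_1; lra.
  - left; now apply ln_lt_sub1.
Qed.

Lemma ln2_lt1 : ln 2 < 1.
Proof. assert (h := ln_lt_sub1 2 ltac:(lra) ltac:(lra)). lra. Qed.

Lemma psi_ge0 s : 0 < s -> 0 <= Psi s.
Proof. intros h; unfold Psi; pose proof (ln_le_sub1 s h); lra. Qed.

Lemma psi_pos s : 0 < s -> s <> 1 -> 0 < Psi s.
Proof. intros h h'; unfold Psi; pose proof (ln_lt_sub1 s h h'); lra. Qed.

Lemma psi_lin s : 0 < s -> s / 2 - 1 <= Psi s.
Proof.
  intros h; unfold Psi.
  assert (e : ln s = ln 2 + ln (s/2)).
  { rewrite <- ln_mult by lra. f_equal; field. }
  pose proof (ln_le_sub1 (s/2) ltac:(lra)). pose proof ln2_lt1. lra.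
Qed.

Lemma psi_ln s : 0 < s -> ln s - 1 <= Psi s.
Proof.
  intros h; unfold Psi.
  assert (e : ln s = ln 2 + ln (s/2)).
  { rewrite <- ln_mult by lra. f_equal; field. }
  pose proof (ln_le_sub1 (s/2) ltac:(lra)). pose proof ln2_lt1. lra.
Qed.

Lemma psi_nln s : 0 < s -> - ln s - 1 <= Psi s.
Proof. intros h; unfold Psi; lra. Qed.

Lemma div_nn a b : 0 <= a -> 0 < b -> 0 <= a / b.
Proof. intros; unfold Rdiv; apply Rmult_le_pos; [lra| left; now apply Rinv_0_lt_compat]. Qed.

Lemma sq_pos a : a <> 0 -> 0 < a ^ 2.
Proof. intros h. simpl. rewrite Rmult_1_r. destruct (Rlt_or_le a 0). nra. assert (0 < a) by lra. nra. Qed.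

Lemma key_eq f t l l' : derivable_pt_lim f t l -> l = l' -> derivable_pt_lim f t l'.
Proof. intros h ->; exact h. Qed.

Theorem mainTheorem5 :
  (forall (x y : R -> R) (t : R),
      0 < x t -> 0 < y t ->
      derivable_pt_lim x t ((1 - y t) * x t) ->
      derivable_pt_lim y t ((x t - Ufb (x t) (y t)) * y t) ->
      derivable_pt_lim (fun s => V (x s) (y s)) t (Vdot (x t) (y t)))
  /\
  (Vdot 1 1 = 0 /\
   forall X Y : R, 0 < X -> 0 < Y -> (X, Y) <> (1, 1) -> Vdot X Y < 0)
  /\
  (V 1 1 = 0 /\
   forall X Y : R, 0 < X -> 0 < Y -> (X, Y) <> (1, 1) -> 0 < V X Y)
  /\
  (forall M : R, exists delta : R, 0 < delta /\
     forall X Y : R, 0 < X -> 0 < Y ->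
       (X < delta \/ Y < delta \/ 1 / delta < X + Y) -> M < V X Y).
Proof.
  split; [|split; [|split]].
  - intros x y t hx hy dx dy.
    assert (Hq := derivable_pt_lim_div (fct_cte 1) x t _ _ (derivable_pt_lim_const 1 t) dx
                    ltac:(lra)).
    assert (Hr := derivable_pt_lim_div y x t _ _ dy dx ltac:(lra)).
    assert (Hl1 := derivable_pt_lim_comp _ ln t _ _ Hq
                     (derivable_pt_lim_ln ((fct_cte 1 / x)%F t)
                        ltac:(unfold div_fct, fct_cte; apply Rdiv_lt_0_compat; lra))).
    assert (Hl2 := derivable_pt_lim_comp _ ln t _ _ Hr
                     (derivable_pt_lim_ln ((y / x)%F t)
                        ltac:(unfold div_fct; apply Rdiv_lt_0_compat; lra))).
    assert (H1 := derivable_pt_lim_minus _ _ t _ _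
                    (derivable_pt_lim_minus _ _ t _ _ Hq (derivable_pt_lim_const 1 t)) Hl1).
    assert (H2 := derivable_pt_lim_minus _ _ t _ _
                    (derivable_pt_lim_minus _ _ t _ _ Hr (derivable_pt_lim_const 1 t)) Hl2).
    assert (H := derivable_pt_lim_plus _ _ t _ _ H1 H2).
    eapply (key_eq (fun s => V (x s) (y s))).
    + unfold V, Psi. exact H.
    + unfold div_fct, fct_cte, Vdot, Ufb, Rsqr. field. lra.
  - split.
    + unfold Vdot; field.
    + intros X Y hX hY hne. unfold Vdot.
      assert (a : 0 <= (X-1)^2 / X) by (apply div_nn; [apply pow2_ge_0|lra]).
      assert (b : 0 <= (Y-X)^2 / (X*Y)) by (apply div_nn; [apply pow2_ge_0| apply Rmult_lt_0_compat; lra]).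
      destruct (Req_dec X 1) as [e|e].
      * subst X. assert (Y <> 1) by (intro; subst; auto).
        assert (0 < (Y-1)^2 / (1*Y)) by (apply Rdiv_lt_0_compat; [apply sq_pos; lra|lra]).
        lra.
      * assert (0 < (X-1)^2 / X) by (apply Rdiv_lt_0_compat; [apply sq_pos; lra|lra]).
        lra.
  - split.
    + unfold V, Psi. replace (1/1) with 1 by field. rewrite ln_1; ring.
    + intros X Y hX hY hne. unfold V.
      assert (p1 := psi_ge0 (1/X) ltac:(apply Rdiv_lt_0_compat; lra)).
      assert (p2 := psi_ge0 (Y/X) ltac:(apply Rdiv_lt_0_compat; lra)).
      destruct (Req_dec X 1) as [e|e].
      * subst X. assert (Y <> 1) by (intro; subst; auto).
        assert (0 < Psi (Y/1)) by (apply psi_pos; [lra| unfold Rdiv; rewrite Rinv_1, Rmult_1_r; auto]).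
        lra.
      * assert (0 < Psi (1/X)).
        { apply psi_pos. apply Rdiv_lt_0_compat; lra.
          intro h. apply e. assert (X * (1/X) = X * 1) by (rewrite h; auto).
          field_simplify in H; lra. }
        lra.
  - intros M. set (K := Rabs M + 3).
    assert (hK : 3 <= K) by (unfold K; pose proof (Rabs_pos M); lra).
    assert (hMK : M + 3 <= K) by (unfold K; pose proof (Rle_abs M); lra).
    assert (he : 1 <= exp K) by (pose proof (exp_ineq1 K ltac:(lra)); lra).
    exists (exp (-K) / (2*K)).
    assert (hen : 0 < exp (-K)) by apply exp_pos.
    assert (eK : exp (-K) * exp K = 1) by (rewrite <- exp_plus; replace (-K+K) with 0 by ring; apply exp_0).
    split. { apply Rdiv_lt_0_compat; lra. }
    intros X Y hX hY hc.
    assert (hX1 : 0 < 1/X) by (apply Rdiv_lt_0_compat; lra).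
    assert (hYX : 0 < Y/X) by (apply Rdiv_lt_0_compat; lra).
    assert (lYX : ln (Y/X) = ln Y - ln X).
    { unfold Rdiv. rewrite ln_mult, ln_Rinv; try lra; apply Rinv_0_lt_compat; lra. }
    assert (l1X : ln (1/X) = - ln X).
    { unfold Rdiv. rewrite Rmult_1_l, ln_Rinv; lra. }
    unfold V.
    destruct hc as [hc|[hc|hc]].
    + assert (p1 := psi_lin (1/X) hX1). assert (p2 := psi_ge0 (Y/X) hYX).
      assert (1/(2*X) > K) .
      { apply Rlt_gt. apply (Rmult_lt_reg_r (2*X)). lra.
        replace (1/(2*X) * (2*X)) with 1 by (field; lra).
        assert (K * X < K * (exp (-K) / (2*K))) by (apply Rmult_lt_compat_l; lra).
        replace (K * (exp (-K) / (2*K))) with (exp (-K) / 2) in H by (field; lra).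
        assert (exp (-K) <= 1) by nra. nra. }
      replace (1/X/2) with (1/(2*X)) in p1 by (field; lra). lra.
    + assert (p1 := psi_ln (1/X) hX1). assert (p2 := psi_nln (Y/X) hYX).
      rewrite l1X in p1. rewrite lYX in p2.
      assert (ln Y < ln (exp (-K) / (2*K))) by (apply ln_increasing; lra).
      unfold Rdiv in H. rewrite ln_mult, ln_exp, ln_Rinv in H; try lra.
      2: apply Rinv_0_lt_compat; lra.
      assert (0 < ln (2*K)) by (rewrite <- ln_1; apply ln_increasing; lra).
      lra.
    + assert (hd : 1 / (exp (-K) / (2*K)) = 2 * K * exp K).
      { rewrite exp_Ropp. field. split; lra. }
      rewrite hd in hc.
      assert (hb : ln (K * exp K) = ln K + K) by (rewrite ln_mult, ln_exp; lra).
      assert (hK0 : 0 < ln K) by (rewrite <- ln_1; apply ln_increasing; lra).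
      destruct (Rle_or_lt Y X) as [hxy|hxy].
      * assert (p1 := psi_ln (1/X) hX1). assert (p2 := psi_ge0 (Y/X) hYX).
        assert (p1' := psi_nln (1/X) hX1). rewrite l1X in p1'.
        assert (ln (K * exp K) < ln X) by (apply ln_increasing; nra).
        lra.
      * assert (p1 := psi_nln (1/X) hX1). assert (p2 := psi_ln (Y/X) hYX).
        rewrite l1X in p1. rewrite lYX in p2.
        assert (ln (K * exp K) < ln Y) by (apply ln_increasing; nra).
        lra.
Qed.
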